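(* Let $S$ be a numerical semigroup with conductor $c$, and let $M=\{m=m_1<\cdots<m_r\}\subseteq S$ with $m\ge 2c-1$. Then $M$ is $(S,m,r)$-amenable if and only if for all $i\in\{1,\ldots,r\}$ and every minimal generator $g$ of $S$, if $m_i-g\ge m$ then $m_i-g\in M$.
   Context: A numerical semigroup is a submonoid of $\mathbb N$ with finite complement; its minimal generators are its irreducible nonzero elements (those not a sum of two nonzero elements of $S$); its conductor $c$ is the least element of $S$ such that $c+n\in S$ for all $n\in\mathbb N$. For $x\in S$, $\mathrm D(x)=\{\alpha\in S\mid x-\alpha\in S\}$. A set $M=\{m_1<\cdots<m_r\}\subseteq S$ with $2c-1\le m=m_1$ is $(S,m,r)$-amenable if $\mathrm D(m_i)\cap[m,\infty)\subseteq M$ for all $i\in\{1,\ldots,r\}$. *)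

(* Defs.v *)
From mathcomp Require Import all_boot.
Set Implicit Arguments. Unset Strict Implicit. Unset Printing Implicit Defensive.

Definition numerical_semigroup (S : pred nat) : Prop :=
  [/\ 0 \in S,
      (forall a b, a \in S -> b \in S -> a + b \in S)
    & exists N, forall n, N <= n -> n \in S].

Definition is_conductor (S : pred nat) (c : nat) : Prop :=
  [/\ c \in S, (forall n, c + n \in S)
    & forall c', c' \in S -> (forall n, c' + n \in S) -> c <= c'].

Definition minimal_generator (S : pred nat) (g : nat) : Prop :=
  [/\ g \in S, g != 0
    & ~ exists a b, [/\ a \in S, b \in S, a != 0, b != 0 & g = a + b]].

(* D(x) = { alpha in S | x - alpha in S } (genuine subtraction, so alpha <= x). *)
Definition D (S : pred nat) (x : nat) : pred nat :=
  fun alpha => [&& alpha \in S, alpha <= x & (x - alpha) \in S].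

(* M = m :: ms = {m_1 < ... < m_r} (r = size M) is (S, m, r)-amenable. *)
Definition amenable (S : pred nat) (M : seq nat) (m : nat) : Prop :=
  forall x, x \in M -> forall alpha, alpha \in D S x -> m <= alpha -> alpha \in M.

(* Main.v *)
Require Import Defs.
From mathcomp Require Import all_boot.
From Stdlib Require Import Classical.
From mathcomp Require Import zify.

Lemma decomp (S : pred nat) :
  (forall a b, a \in S -> b \in S -> a + b \in S) -> 0 \in S ->
  forall d, d \in S -> d != 0 ->
  exists g d', [/\ minimal_generator S g, d' \in S & d = g + d'].
Proof.
move=> Hadd H0 d; elim: d {-2}d (leqnn d) => [|n IH] d Hd dS dn0.
  by move: dn0; have -> : d = 0 by lia.
case: (classic (exists a b, [/\ a \in S, b \in S, a != 0, b != 0 & d = a + b])).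
  move=> [a [b [aS bS an0 bn0 E]]]; subst d.
  have Ha : a <= n.
  { move: bn0 Hd; rewrite -lt0n. lia. }
  have [g [a' [Hg a'S ->]]] := IH a Ha aS an0.
  exists g, (a' + b); split => //; first by apply: Hadd.
  by rewrite addnA.
move=> Hn; exists d, 0; split => //; last by rewrite addn0.
Qed.

Theorem proposition3p9 (S : pred nat) (c : nat) (m : nat) (ms : seq nat) :
  numerical_semigroup S ->
  is_conductor S c ->
  sorted ltn (m :: ms) ->
  {subset (m :: ms) <= S} ->
  2 * c - 1 <= m ->
  (amenable S (m :: ms) m <->
   (forall x, x \in m :: ms -> forall g, minimal_generator S g ->
      m + g <= x -> x - g \in m :: ms)).
Proof.
move=> [H0 Hadd _] [cS Hc _] _ Msub Hm; split.
  move=> Ham x xM g [gS gn0 _] Hx.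
  apply: (Ham x xM) => //; last by lia.
  rewrite /D /in_mem /=.
  have -> : x - (x - g) = g by lia.
  rewrite -[S g]/(g \in S) gS leq_subr andbT.
  have -> : x - g = c + (x - g - c) by lia.
  by rewrite andbT; exact: (Hc (x - g - c)).
move=> Hcond x xM alpha Hal Hmal.
move: Hal; rewrite /D /in_mem /= => /and3P [alS alx dS].
move: {2}(x - alpha) (leqnn (x - alpha)) => n.
elim: n x xM alx dS => [|n IH] x xM alx dS Hn.
  by have -> : alpha = x by lia.
case: (eqVneq (x - alpha) 0) => [E|dn0]; first by have -> : alpha = x by lia.
have [g [d' [Hg d'S Hd]]] := @decomp S Hadd H0 _ dS dn0.
have gn0 : g != 0 by case: Hg.
have Hx' : x - g \in m :: ms by apply: Hcond => //; lia.
apply: (IH (x - g)) => //; first by lia.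
  by have -> : x - g - alpha = d' by lia.
lia.
Qed.
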